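(* Let $\lambda$ and $\mu$ be infinite cardinals with $\mu^\lambda=\mu$. Then $\mu^+\to_{hc}(\mu)^2_\lambda$: for every coloring $c:[\mu^+]^2\to\lambda$ there exist $i<\lambda$ and $A\subseteq\mu^+$ with $|A|=\mu$ such that the graph $(A,c^{-1}(i)\cap[A]^2)$ is highly connected.
   Context: $[S]^2$ denotes the set of $2$-element subsets of $S$. A graph $G=(V,E)$ is highly connected if for every $D\subseteq V$ with $|D|<|V|$ the graph induced on $V\setminus D$ is connected. For cardinals $\nu,\mu,\lambda$, $\nu\to_{hc}(\mu)^2_\lambda$ means: for every $c:[\nu]^2\to\lambda$ there exist $\xi<\lambda$ and $X\subseteq\nu$ with $|X|=\mu$ such that $(X,c^{-1}(\xi)\cap[X]^2)$ is highly connected. *)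

(* Defs.v *)
(* cardinals represented by types, compared via injections. *)
From Stdlib Require Import Relations.

Definition inj_le (A B : Type) : Prop :=
  exists f : A -> B, forall x y, f x = f y -> x = y.

Definition equipotent (A B : Type) : Prop :=
  exists (f : A -> B) (g : B -> A),
    (forall x, g (f x) = x) /\ (forall y, f (g y) = y).

Definition card_lt (A B : Type) : Prop := inj_le A B /\ ~ inj_le B A.

Definition infinite (A : Type) : Prop := inj_le nat A.

Definition is_succ_card (M P : Type) : Prop :=
  card_lt M P /\
  forall S : P -> Prop, inj_le {x | S x} M \/ equipotent {x | S x} P.

Definition connected_on (V : Type) (W : V -> Prop) (E : V -> V -> Prop) : Prop :=
  forall x y, W x -> W y ->
    clos_refl_trans V (fun u v => W u /\ W v /\ E u v) x y.

Definition highly_connected (V : Type) (A : V -> Prop) (E : V -> V -> Prop) : Prop :=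
  forall D : V -> Prop, (forall x, D x -> A x) ->
    card_lt {x | D x} {x | A x} ->
    connected_on V (fun x => A x /\ ~ D x) E.

(* Main.v *)
Require Import Defs.
From Stdlib Require Import ClassicalEpsilon FunctionalExtensionality Classical Relations.

Notation xm := excluded_middle_informative.
Definition cid {A : Type} {Q : A -> Prop} (H : exists x, Q x) : {x | Q x} := constructive_indefinite_description Q H.

Lemma inj_trans (A B C : Type) : inj_le A B -> inj_le B C -> inj_le A C.
Proof.
  intros [f fi] [g gi]. exists (fun a => g (f a)). intros x y E. apply fi, gi, E.
Qed.

Inductive inC {A B : Type} (f : A -> B) (g : B -> A) : A -> Prop :=
| inC0 a : (forall b, g b <> a) -> inC f g a
| inCS a : inC f g a -> inC f g (g (f a)).

Lemma SB (A B : Type) : inj_le A B -> inj_le B A -> equipotent A B.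
Proof.
  intros [f fi] [g gi].
  assert (L1 : forall a, ~ inC f g a -> exists b, g b = a).
  { intros a Hn. apply NNPP. intro Hc. apply Hn. apply inC0.
    intros b E. apply Hc. exists b. exact E. }
  assert (L2 : forall b, inC f g (g b) -> exists a, inC f g a /\ f a = b).
  { intros b H. remember (g b) as x eqn:Ex. destruct H as [a Ha|a Ha].
    - exfalso. apply (Ha b). symmetry; exact Ex.
    - exists a. split; [exact Ha|]. apply gi. exact Ex. }
  exists (fun a => match xm (inC f g a) with left _ => f a
                   | right Hn => proj1_sig (cid (L1 a Hn)) end).
  exists (fun b => match xm (inC f g (g b)) with left H => proj1_sig (cid (L2 b H))
                   | right _ => g b end).
  split.
  - intro a. destruct (xm (inC f g a)) as [Ha|Ha].
    + destruct (xm (inC f g (g (f a)))) as [H|H].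
      * destruct (cid (L2 (f a) H)) as [a' [Hq E]]. simpl. apply fi, E.
      * exfalso. apply H. apply inCS, Ha.
    + destruct (cid (L1 a Ha)) as [b Eb]. simpl.
      destruct (xm (inC f g (g b))) as [H|H].
      * exfalso. rewrite Eb in H. exact (Ha H).
      * exact Eb.
  - intro b. destruct (xm (inC f g (g b))) as [H|H].
    + destruct (cid (L2 b H)) as [a [Ha E]]. simpl.
      destruct (xm (inC f g a)) as [Hq|Hn]; [exact E| contradiction].
    + destruct (xm (inC f g (g b))) as [H'|Hq]; [contradiction|].
      destruct (cid (L1 (g b) Hq)) as [b' E]. simpl. apply gi, E.
Qed.

Lemma avoid (M : Type) (om : option M -> M) (omi : forall x y, om x = om y -> x = y)
  (a : M) : exists s : M -> M, (forall x y, s x = s y -> x = y) /\ (forall m, s m <> a).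
Proof.
  destruct (xm (exists b, om (Some b) = a)) as [[b Hb]|Hn].
  - exists (fun m => if xm (m = b) then om None else om (Some m)). split.
    + intros x y. destruct (xm (x = b)), (xm (y = b)); intro E; try congruence;
        apply omi in E; congruence.
    + intros m. destruct (xm (m = b)) as [E|E]; intro E'.
      * rewrite <- Hb in E'. apply omi in E'. discriminate.
      * rewrite <- Hb in E'. apply omi in E'. congruence.
  - exists (fun m => om (Some m)). split.
    + intros x y E. apply omi in E. congruence.
    + intros m E. apply Hn. exists m. exact E.
Qed.

Lemma big_remove (M P : Type) (om : option M -> M) (omi : forall x y, om x = om y -> x = y)
  (S : P -> Prop) (p : P) :
  inj_le M {w | S w} -> inj_le M {w | S w /\ w <> p}.
Proof.
  intros [e ei].
  destruct (xm (exists a, proj1_sig (e a) = p)) as [[a Ha]|Hn].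
  - destruct (avoid M om omi a) as [s [si sa]].
    assert (K : forall m, S (proj1_sig (e (s m))) /\ proj1_sig (e (s m)) <> p).
    { intro m. split. apply (proj2_sig (e (s m))).
      intro E. rewrite <- Ha in E. apply (sa m). apply ei. apply eq_sig_hprop; auto.
      intros; apply proof_irrelevance. }
    exists (fun m => exist (fun w => S w /\ w <> p) _ (K m)). intros x y E.
    apply si, ei. apply eq_sig_hprop. intros; apply proof_irrelevance.
    apply (f_equal (@proj1_sig _ _)) in E. exact E.
  - assert (K : forall m, S (proj1_sig (e m)) /\ proj1_sig (e m) <> p).
    { intro m. split. apply (proj2_sig (e m)). intro E. apply Hn. exists m. exact E. }
    exists (fun m => exist (fun w => S w /\ w <> p) _ (K m)). intros x y E.
    apply ei. apply eq_sig_hprop. intros; apply proof_irrelevance.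
    apply (f_equal (@proj1_sig _ _)) in E. exact E.
Qed.

Inductive term (M L : Type) : Type :=
| leaf : term M L
| node : M -> (L * bool -> L) -> (L * bool -> term M L) -> term M L.
Arguments leaf {M L}.
Arguments node {M L}.

Definition big (M P : Type) (S : P -> Prop) : Prop := inj_le M {w | S w}.
Definition small (M P : Type) (S : P -> Prop) : Prop := inj_le {w | S w} M.

Definition Rt {P L : Type} (c : P -> P -> L) (B : L * bool -> P) (t : L * bool -> L) (w : P)
  : Prop := forall j, c w (B j) = t j.

Definition G {L M P : Type} (c : P -> P -> L) (p0 : P) (B : L * bool -> P)
  (t : L * bool -> L) (k : M) : P :=
  match xm (big M P (Rt c B t)) with
  | left H => proj1_sig (proj1_sig (cid H) k)
  | right _ => p0 end.

Lemma G_spec {L M P : Type} (c : P -> P -> L) (p0 : P) B t :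
  big M P (Rt c B t) ->
  (forall k : M, Rt c B t (G c p0 B t k)) /\
  (forall k k' : M, G c p0 B t k = G c p0 B t k' -> k = k').
Proof.
  intro H. unfold G. destruct (xm (big M P (Rt c B t))) as [H'|H']; [|contradiction].
  destruct (cid H') as [e ei]. simpl. split.
  - intro k. exact (proj2_sig (e k)).
  - intros k k' E. apply ei. apply eq_sig_hprop. intros; apply proof_irrelevance. exact E.
Qed.

Fixpoint ev {L M P : Type} (c : P -> P -> L) (p0 : P) (tau : term M L) : P :=
  match tau with
  | leaf => p0
  | node k t F => G c p0 (fun j => ev c p0 (F j)) t k
  end.

Fixpoint code {L M : Type} (enc : option (M * (L * bool -> L) * (L * bool -> M)) -> M)
  (tau : term M L) : M :=
  match tau with
  | leaf => enc None
  | node k t F => enc (Some (k, t, fun j => code enc (F j)))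
  end.

Lemma code_inj {L M : Type} (enc : option (M * (L * bool -> L) * (L * bool -> M)) -> M)
  (enci : forall a b, enc a = enc b -> a = b) :
  forall tau tau', code enc tau = code enc tau' -> tau = tau'.
Proof.
  induction tau as [|k t F IH]; intros [|k' t' F'] E; simpl in E; apply enci in E;
    try discriminate; auto.
  injection E. intros E3 E2 E1. subst.
  f_equal. apply functional_extensionality. intro j. apply IH.
  exact (equal_f E3 j).
Qed.

Definition Esm {P M : Type} (m0 : M) (S : P -> Prop) (p : P) : M :=
  match xm (small M P S) with
  | left H => match xm (S p) with
              | left Hp => proj1_sig (cid H) (exist _ p Hp)
              | right _ => m0 end
  | right _ => m0 end.

Lemma Esm_inj {P M : Type} (m0 : M) (S : P -> Prop) x y :
  small M P S -> S x -> S y -> Esm m0 S x = Esm m0 S y -> x = y.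
Proof.
  intros H Hx Hy. unfold Esm. destruct (xm (small M P S)) as [H'|H']; [|contradiction].
  destruct (xm (S x)) as [Hx'|Hx']; [|contradiction].
  destruct (xm (S y)) as [Hy'|Hy']; [|contradiction].
  destruct (cid H') as [e ei]. simpl. intro E. apply ei in E.
  exact (f_equal (@proj1_sig _ _) E).
Qed.

Theorem mainTheorem6 (L M P : Type)
  (HL : infinite L) (HM : infinite M)
  (Hexp : equipotent (L -> M) M)
  (HP : is_succ_card M P)
  (c : P -> P -> L) (Hc : forall x y, c x y = c y x) :
  exists (i : L) (A : P -> Prop),
    equipotent {x | A x} M /\
    highly_connected P A (fun u v => u <> v /\ c u v = i).
Proof.
  destruct HL as [nL nLi]. destruct HM as [nM nMi].
  set (m0 := nM 0). set (m1 := nM 1).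
  assert (m01 : m0 <> m1) by (intro E; apply nMi in E; discriminate).
  set (l0 := nL 0). set (l1 := nL 1).
  assert (l01 : l1 <> l0) by (intro E; apply nLi in E; discriminate).
  destruct Hexp as [f [g [gf fg]]].
  assert (fi : forall x y, f x = f y -> x = y).
  { intros x y E. rewrite <- (gf x), <- (gf y), E. reflexivity. }
  set (pr := fun ab : M * M => f (fun l => if xm (l = l0) then fst ab else snd ab)).
  assert (pri : forall x y, pr x = pr y -> x = y).
  { intros [a b] [a' b'] E. apply fi in E. unfold pr in E.
    pose proof (equal_f E l0) as E0. pose proof (equal_f E l1) as E1. simpl in *.
    destruct (xm (l0 = l0)) as [_|N]; [|congruence].
    destruct (xm (l1 = l0)) as [N|_]; [congruence|]. congruence. }
  set (lm := fun l => f (fun l' => if xm (l' = l) then m1 else m0)).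
  assert (lmi : forall x y, lm x = lm y -> x = y).
  { intros x y E. apply fi in E. pose proof (equal_f E x) as E0. simpl in E0.
    destruct (xm (x = x)) as [_|N]; [|congruence].
    destruct (xm (x = y)) as [Q|_]; congruence. }
  set (im := fun phi : L * bool -> M => f (fun l => pr (phi (l, false), phi (l, true)))).
  assert (imi : forall x y, im x = im y -> x = y).
  { intros x y E. apply fi in E. apply functional_extensionality. intros [l b].
    pose proof (equal_f E l) as E0. simpl in E0. apply pri in E0.
    injection E0. destruct b; auto. }
  set (om := fun o : option M => match o with None => pr (m0, m0) | Some m => pr (m, m1) end).
  assert (omi : forall x y, om x = om y -> x = y).
  { intros [a|] [b|] E; simpl in E; apply pri in E; inversion E; subst; auto; congruence. }
  set (enc := fun o : option (M * (L * bool -> L) * (L * bool -> M)) =>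
    match o with None => om None
    | Some (k, t, phi) => om (Some (pr (k, pr (im (fun j => lm (t j)), im phi)))) end).
  assert (enci : forall x y, enc x = enc y -> x = y).
  { intros [[[k t] phi]|] [[[k' t'] phi']|] E; cbv beta iota zeta delta [enc] in E; apply omi in E; try discriminate;
      auto.
    injection E. intro E1. apply pri in E1. injection E1. intros E2 E3. subst.
    apply pri in E2. injection E2. intros E4 E5. apply imi in E4, E5. subst.
    assert (t = t').
    { apply functional_extensionality. intro j. apply lmi. exact (equal_f E5 j). }
    subst. reflexivity. }
  destruct HP as [[[fMP fMPi] HnPM] Hsplit].
  assert (dich : forall S : P -> Prop, small M P S \/ big M P S).
  { intro S. destruct (Hsplit S) as [H|[u [v [vu uv]]]]; [left; exact H|right].
    exists (fun m => v (fMP m)). intros x y E. apply fMPi.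
    rewrite <- (uv (fMP x)), <- (uv (fMP y)), E. reflexivity. }
  set (p0 := fMP m0).
  set (X := fun p => exists (F : L * bool -> term M L) (t : L * bool -> L),
        small M P (Rt c (fun j => ev c p0 (F j)) t) /\ Rt c (fun j => ev c p0 (F j)) t p).
  assert (Hdelta : exists delta, ~ X delta).
  { apply NNPP. intro Hn. apply HnPM.
    assert (HX : forall p, X p).
    { intro p. apply NNPP. intro Hp. apply Hn. exists p. exact Hp. }
    exists (fun p => let H := HX p in let F := proj1_sig (cid H) in
       let t := proj1_sig (cid (proj2_sig (cid H))) in
       pr (code enc (node m0 t F), Esm m0 (Rt c (fun j => ev c p0 (F j)) t) p)).
    intros p q. cbv beta zeta.
    destruct (cid (HX p)) as [F HF]. destruct (cid (HX q)) as [F' HF'].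
    cbv beta iota delta [proj1_sig proj2_sig].
    destruct (cid HF) as [t Ht]. destruct (cid HF') as [t' Ht'].
    cbv beta iota delta [proj1_sig].
    intro E. apply pri in E. injection E. intros E2 E1.
    assert (E1' : node m0 t F = node m0 t' F') by (apply (code_inj enc enci); exact E1).
    injection E1'. intros; subst.
    destruct Ht as [Hs Hr]. destruct Ht' as [_ Hr'].
    exact (Esm_inj m0 _ p q Hs Hr Hr' E2). }
  destruct Hdelta as [delta Hdelta].
  assert (Hd : forall F : L * bool -> term M L,
    big M P (Rt c (fun j => ev c p0 (F j)) (fun j => c delta (ev c p0 (F j))))).
  { intro F. destruct (dich (Rt c (fun j => ev c p0 (F j)) (fun j => c delta (ev c p0 (F j)))))
      as [H|H]; [|exact H].
    exfalso. apply Hdelta. exists F, (fun j => c delta (ev c p0 (F j))). split; [exact H|].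
    intro j. reflexivity. }
  set (N := fun w => exists tau : term M L, ev c p0 tau = w).
  set (Sg := fun (i : L) (t1 t2 : term M L) (w : P) =>
     N w /\ c w (ev c p0 t1) = c delta (ev c p0 t1) /\
     c w (ev c p0 t2) = c delta (ev c p0 t2) /\ c delta w = i).
  assert (Hgood : exists i, forall t1 t2, big M P (Sg i t1 t2)).
  { apply NNPP. intro Hng.
    assert (H1 : forall i, exists pq : term M L * term M L,
               ~ big M P (Sg i (fst pq) (snd pq))).
    { intro i. apply NNPP. intro H. apply Hng. exists i. intros t1 t2. apply NNPP.
      intro Hb. apply H. exists (t1, t2). exact Hb. }
    set (pick := fun i => proj1_sig (cid (H1 i))).
    assert (Hpick : forall i, ~ big M P (Sg i (fst (pick i)) (snd (pick i))))
      by (intro i; exact (proj2_sig (cid (H1 i)))).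
    set (F := fun j : L * bool => if snd j then snd (pick (fst j)) else fst (pick (fst j))).
    set (td := fun j => c delta (ev c p0 (F j))).
    destruct (G_spec (M:=M) c p0 (fun j => ev c p0 (F j)) td (Hd F)) as [GR GI].
    set (e := fun k : M => G c p0 (fun j => ev c p0 (F j)) td k).
    assert (eN : forall k, N (e k)) by (intro k; exists (node k td F); reflexivity).
    assert (K : forall i, exists d, forall m, c delta (e m) = i -> g m i <> d).
    { intro i. apply NNPP. intro Hn.
      assert (Hs : forall d, exists m, c delta (e m) = i /\ g m i = d).
      { intro d. apply NNPP. intro H2. apply Hn. exists d. intros m Hm Hg. apply H2.
        exists m. split; assumption. }
      apply (Hpick i).
      set (s := fun d => proj1_sig (cid (Hs d))).
      assert (Hs' : forall d, c delta (e (s d)) = i /\ g (s d) i = d)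
        by (intro d; exact (proj2_sig (cid (Hs d)))).
      assert (Hin : forall d, Sg i (fst (pick i)) (snd (pick i)) (e (s d))).
      { intro d. split; [apply eN|]. split; [|split].
        - exact (GR (s d) (i, false)).
        - exact (GR (s d) (i, true)).
        - apply Hs'. }
      exists (fun d => exist _ _ (Hin d)). intros d d' E.
      apply (f_equal (@proj1_sig _ _)) in E. cbn [proj1_sig] in E. apply GI in E.
      rewrite <- (proj2 (Hs' d)), <- (proj2 (Hs' d')), E. reflexivity. }
    set (dd := fun i => proj1_sig (cid (K i))).
    set (m := f dd). set (i := c delta (e m)).
    pose proof (proj2_sig (cid (K i)) m eq_refl) as Z. apply Z.
    change (g (f dd) i = dd i). rewrite gf. reflexivity. }
  destruct Hgood as [i Hi].
  set (A := fun w => N w /\ c delta w = i).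
  assert (AM : inj_le {x | A x} M).
  { exists (fun a : {x | A x} => code enc (proj1_sig
      (cid (Q := fun tau => ev c p0 tau = proj1_sig a) (proj1 (proj2_sig a))))).
    intros [a Ha] [b Hb] E. cbn [proj1_sig proj2_sig] in E.
    destruct (cid (proj1 Ha)) as [ta Ea]. destruct (cid (proj1 Hb)) as [tb Eb].
    cbn [proj1_sig] in E.
    assert (Et : ta = tb) by (apply (code_inj enc enci); exact E).
    subst. apply eq_sig_hprop; [intros; apply proof_irrelevance|]. cbn [proj1_sig].
    congruence. }
  assert (MA : inj_le M {x | A x}).
  { destruct (Hi leaf leaf) as [e ei].
    assert (HA : forall k, A (proj1_sig (e k))).
    { intro k. destruct (proj2_sig (e k)) as [HN [_ [_ Hc']]]. split; assumption. }
    exists (fun k => exist A _ (HA k)). intros x y E. apply ei, eq_sig_hprop;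
      [intros; apply proof_irrelevance|]. exact (f_equal (@proj1_sig _ _) E). }
  exists i, A. split; [apply SB; assumption|].
  intros D HDA [_ HnAD] x y [Ax nDx] [Ay nDy].
  destruct Ax as [[tx Ex] cx]. destruct Ay as [[ty Ey] cy].
  pose proof (Hi tx ty) as Hb.
  apply (big_remove M P om omi _ x) in Hb. apply (big_remove M P om omi _ y) in Hb.
  assert (Hw : exists w, ((Sg i tx ty w /\ w <> x) /\ w <> y) /\ ~ D w).
  { apply NNPP. intro Hn. apply HnAD. apply (inj_trans _ M _ AM).
    destruct Hb as [e ei].
    assert (HD : forall k, D (proj1_sig (e k))).
    { intro k. apply NNPP. intro Hk. apply Hn. exists (proj1_sig (e k)).
      split; [exact (proj2_sig (e k))|exact Hk]. }
    exists (fun k => exist D _ (HD k)). intros a b E. apply ei, eq_sig_hprop;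
      [intros; apply proof_irrelevance|]. exact (f_equal (@proj1_sig _ _) E). }
  destruct Hw as [w [[[Sw wx] wy] nDw]].
  destruct Sw as [Nw [cwx [cwy cdw]]]. subst x y.
  apply rt_trans with w; apply rt_step; cbv beta.
  - split; [split; [split; [exists tx; reflexivity|exact cx]|exact nDx]|].
    split; [split; [split; [exact Nw|exact cdw]|exact nDw]|].
    split; [intro E; apply wx; symmetry; exact E|].
    rewrite Hc, cwx. exact cx.
  - split; [split; [split; [exact Nw|exact cdw]|exact nDw]|].
    split; [split; [split; [exists ty; reflexivity|exact cy]|exact nDy]|].
    split; [exact wy|].
    rewrite cwy. exact cy.
Qed.
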